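(* With $\mu_n=\{p/n:p\in\mathbb Z,\ |p/n|\le n\}$, $\Lambda_{\mathbb Q}=\{\mu_{m!}:m\in\mathbb N\}$, $I$ a fine ideal of $\mathfrak F(\mathcal P_{fin}(\mathbb Q),\mathbb R)$ containing $I_{0,\Lambda_{\mathbb Q}}$, and $J$ the canonical projection, put $\alpha=\mathfrak n(\mathbb N)=J(\lambda\mapsto|\lambda\cap\mathbb N|)$. Then $\mathfrak n(\mathbb Q^+)=\alpha^2$ and $\mathfrak n(\mathbb Q)=2\alpha^2+1$, and hence in the NAP-space produced by $(\mathbb Q,1,I)$, $P(\mathbb N)=\dfrac{\alpha}{2\alpha^2+1}$.
   Context: $\mathbb N=\{1,2,3,\dots\}$, $\mathbb Q^+=\{x\in\mathbb Q:x>0\}$. $\mathcal P_{fin}(\Omega)$ is the set of finite subsets of $\Omega$ and $\mathfrak F=\mathfrak F(\mathcal P_{fin}(\Omega),\mathbb R)$ the real algebra of functions $\mathcal P_{fin}(\Omega)\to\mathbb R$ with pointwise operations. For $\omega\in\Omega$, $\chi_\lambda(\omega)=1$ if $\omega\in\lambda$, else $0$. An ideal $I$ of $\mathfrak F$ is fine if it is maximal and $\lambda\mapsto 1-\chi_\lambda(\omega)$ lies in $I$ for every $\omega\in\Omega$. For $\Lambda\subseteq\mathcal P_{fin}(\Omega)$, $I_{0,\Lambda}=\{\varphi\in\mathfrak F:\varphi(\lambda)=0\text{ for all }\lambda\in\Lambda\}$. The NAP-space produced by $(\Omega,1,I)$ has $P(A)=J(\lambda\mapsto|A\cap\lambda|)/J(\lambda\mapsto|\lambda|)$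 with $J$ the canonical projection $\mathfrak F\to\mathfrak F/I$; the numerosity of $A\subseteq\Omega$ is $\mathfrak n(A)=J(\lambda\mapsto|A\cap\lambda|)$ (equivalently $P(A)/P(\{\omega\})$). *)

(* Defs.v *)
From mathcomp Require Import all_boot all_order all_algebra.
From Stdlib Require Import Reals.
Set Implicit Arguments. Unset Strict Implicit. Unset Printing Implicit Defensive.
Import Order.TTheory GRing.Theory Num.Theory.

Section RatPart.
Local Open Scope ring_scope.

(* A finite subset of Q is represented canonically by the strictly
   increasing list of its elements. *)
Definition Pfin : Type := {s : seq rat | sorted (fun x y : rat => x < y) s}.

Definition mem_fin (x : rat) (l : Pfin) : bool := x \in sval l.

Definition natpos : pred rat := fun x => (denq x == 1) && (0 < numq x).
Definition posrat : pred rat := fun x => 0 < x.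
Definition allrat : pred rat := predT.

Definition in_mu (n : nat) (x : rat) : Prop :=
  exists p : int, x = (p%:~R / n%:R) /\ `|x| <= n%:R.

Definition in_LambdaQ (l : Pfin) : Prop :=
  exists m : nat, leq 1 m /\ forall x : rat, mem_fin x l <-> in_mu (m`!) x.

Definition card_in (A : pred rat) (l : Pfin) : nat := count A (sval l).
End RatPart.

Local Open Scope R_scope.

Definition FF := Pfin -> R.

Definition is_ideal (I : FF -> Prop) : Prop :=
  I (fun _ => 0) /\
  (forall f g, I f -> I g -> I (fun l => f l + g l)) /\
  (forall f g, I f -> I (fun l => g l * f l)).

Definition is_maximal_ideal (I : FF -> Prop) : Prop :=
  is_ideal I /\ ~ I (fun _ => 1) /\
  forall K : FF -> Prop, is_ideal K -> (forall f, I f -> K f) ->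
    (forall f, K f -> I f) \/ K (fun _ => 1).

Definition chi (l : Pfin) (w : rat) : R := if mem_fin w l then 1 else 0.

Definition fine_ideal (I : FF -> Prop) : Prop :=
  is_maximal_ideal I /\ forall w : rat, I (fun l => 1 - chi l w).

Definition I0LambdaQ (phi : FF) : Prop := forall l, in_LambdaQ l -> phi l = 0.

(* ---------- the quotient F / I, elements = cosets f + I ---------- *)
Definition FQ := FF -> Prop.

Definition J (I : FF -> Prop) (f : FF) : FQ := fun g => I (fun l => f l - g l).

Definition qconst (I : FF -> Prop) (r : R) : FQ := J I (fun _ => r).
Definition qadd (I : FF -> Prop) (X Y : FQ) : FQ :=
  fun h => exists f g, X = J I f /\ Y = J I g /\ I (fun l => h l - (f l + g l)).
Definition qmul (I : FF -> Prop) (X Y : FQ) : FQ :=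
  fun h => exists f g, X = J I f /\ Y = J I g /\ I (fun l => h l - f l * g l).
Definition qdiv (I : FF -> Prop) (X Y : FQ) : FQ :=
  fun h => exists f g, X = J I f /\ Y = J I g /\ I (fun l => h l * g l - f l).

Definition numerosity (I : FF -> Prop) (A : pred rat) : FQ :=
  J I (fun l => INR (card_in A l)).

Definition NAP_P (I : FF -> Prop) (A : pred rat) : FQ :=
  qdiv I (numerosity I A) (J I (fun l => INR (card_in allrat l))).

(* Main.v *)
From mathcomp Require Import all_boot all_order all_algebra.
From mathcomp Require Import zify ring lra.
Import Order.TTheory GRing.Theory Num.Theory.
From mathcomp Require Import rat.
Require Import Defs.
Module RatPart.
Open Scope ring_scope.

Lemma mu_bound (n : nat) (p : int) : (0 < n)%N ->
  (`|p%:~R / n%:R| <= n%:R :> rat) = (`|p| <= Posz (n*n)%N).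
Proof.
move=> n0.
rewrite normrM normfV (ger0_norm (ler0n _ _)) -intr_norm ler_pdivrMr ?ltr0n //.
by rewrite -natrM -(ler_int rat).
Qed.

Lemma count_eq (P : pred rat) (s t : seq rat) : uniq s -> uniq t ->
  (forall x, (x \in s) && P x = (x \in t)) -> count P s = size t.
Proof.
move=> us ut H; rewrite -size_filter; apply: perm_size; apply: uniq_perm.
- exact: filter_uniq.
- done.
- by move=> x; rewrite mem_filter andbC.
Qed.

Definition tN (n : nat) : seq rat := map (fun k : nat => k%:R) (iota 1 n).
Definition tP (n : nat) : seq rat := map (fun k : nat => k%:R / n%:R) (iota 1 (n*n)).
Definition tA (n : nat) : seq rat :=
  map (fun k : nat => (Posz k - Posz (n*n)%N)%:~R / n%:R) (iota 0 (n*n).*2.+1).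

Lemma tN_uniq n : uniq (tN n).
Proof.
rewrite map_inj_uniq ?iota_uniq // => a b /eqP; rewrite eqr_nat => /eqP //.
Qed.

Lemma tP_uniq n : (0 < n)%N -> uniq (tP n).
Proof.
move=> n0; rewrite map_inj_uniq ?iota_uniq // => a b H.
have nz : (n%:R : rat) != 0 by rewrite pnatr_eq0 -lt0n.
move: H => /(mulIf (invr_neq0 nz)) /eqP; rewrite eqr_nat => /eqP //.
Qed.

Lemma tA_uniq n : (0 < n)%N -> uniq (tA n).
Proof.
move=> n0; rewrite map_inj_uniq ?iota_uniq // => a b H.
have nz : (n%:R : rat) != 0 by rewrite pnatr_eq0 -lt0n.
move: H => /(mulIf (invr_neq0 nz)) /intr_inj /addIr [] //.
Qed.

Lemma tN_mem n x : (0 < n)%N -> (in_mu n x /\ natpos x) <-> x \in tN n.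
Proof.
move=> n0; split.
- move=> [[p [_ Hb]] /andP[/eqP Hd Hnum]].
  have Ex : x = (numq x)%:~R by rewrite numqE Hd mulr1.
  set k := absz (numq x).
  have Ek : numq x = Posz k by rewrite /k; lia.
  have Exk : x = k%:R by rewrite Ex Ek.
  apply/mapP; exists k.
  + rewrite mem_iota; apply/andP; split; first by rewrite /k; lia.
    move: Hb; rewrite Exk normr_nat ler_nat; lia.
  + exact: Exk.
- move=> /mapP [k]; rewrite mem_iota => /andP[k1 kn] ->; split.
  + exists (Posz (k*n)%N); split.
    * have nz : (n%:R : rat) != 0 by rewrite pnatr_eq0 -lt0n.
      by rewrite -[(Posz _)%:~R]/((k*n)%N%:R) natrM mulfK.
    * by rewrite normr_nat ler_nat; lia.
  + rewrite /natpos -[(k%:R : rat)]/((Posz k)%:~R) numq_int denq_int eqxx /=; lia.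
Qed.

Lemma tP_mem n x : (0 < n)%N -> (in_mu n x /\ posrat x) <-> x \in tP n.
Proof.
move=> n0; split.
- move=> [[p [Ex Hb]] Hpos]; move: Hb Hpos; rewrite Ex mu_bound // => Hb Hpos.
  have pp : 0 < p.
    have : 0 < (p%:~R : rat) by move: Hpos; rewrite /posrat pmulr_lgt0 // invr_gt0 ltr0n.
    by rewrite ltr0z.
  have Ek : p = Posz (absz p) by lia.
  apply/mapP; exists (absz p).
  + rewrite mem_iota; apply/andP; split; lia.
  + by rewrite {1}Ek.
- move=> /mapP [k]; rewrite mem_iota => /andP[k1 kn] ->; split.
  + exists (Posz k); split; first by [].
    rewrite -[(k%:R : rat)]/((Posz k)%:~R) mu_bound //; lia.
  + rewrite /posrat divr_gt0 // ltr0n; lia.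
Qed.

Lemma tA_mem n x : (0 < n)%N -> in_mu n x <-> x \in tA n.
Proof.
move=> n0; split.
- move=> [p [Ex Hb]]; move: Hb; rewrite Ex mu_bound // => Hb.
  apply/mapP; exists (absz (p + Posz (n*n)%N)).
  + rewrite mem_iota; apply/andP; split; lia.
  + congr (_%:~R / _); lia.
- move=> /mapP [k]; rewrite mem_iota => /andP[k1 kn] ->.
  exists (Posz k - Posz (n*n)%N); split; first by [].
  rewrite mu_bound //; lia.
Qed.

Lemma counts (l : Pfin) : in_LambdaQ l -> exists n : nat,
  card_in natpos l = n /\ card_in posrat l = (n * n)%N /\
  card_in allrat l = ((n * n).*2.+1)%N.
Proof.
move=> [m [m1 Hm]]; exists (m`!).
have n0 := fact_gt0 m.
have us : uniq (sval l) by apply: lt_sorted_uniq; exact: (svalP l).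
have Hmem : forall x, (x \in sval l) <-> in_mu (m`!) x by move=> x; exact: Hm.
split; [|split].
- rewrite /card_in (@count_eq natpos (sval l) (tN m`!) us (tN_uniq _)) ?size_map ?size_iota //.
  move=> x; apply/idP/idP.
  + by move=> /andP[/Hmem a b]; apply/(tN_mem _ _ n0).
  + by move=> /(tN_mem _ _ n0) [/Hmem a b]; apply/andP.
- rewrite /card_in (@count_eq posrat (sval l) (tP m`!) us (tP_uniq _ n0)) ?size_map ?size_iota //.
  move=> x; apply/idP/idP.
  + by move=> /andP[/Hmem a b]; apply/(tP_mem _ _ n0).
  + by move=> /(tP_mem _ _ n0) [/Hmem a b]; apply/andP.
- rewrite /card_in (@count_eq allrat (sval l) (tA m`!) us (tA_uniq _ n0)) ?size_map ?size_iota //.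
  move=> x; apply/idP/idP.
  + by move=> /andP[/Hmem a b]; apply/(tA_mem _ _ n0).
  + by move=> /(tA_mem _ _ n0) /Hmem a; apply/andP.
Qed.
End RatPart.
Module RealPart.
From Stdlib Require Import Reals Lra FunctionalExtensionality PropExtensionality.
Local Open Scope R_scope.

Section Id.
Variable I : FF -> Prop.
Hypothesis HI : is_ideal I.

Lemma I_ext f g : I f -> (forall l, f l = g l) -> I g.
Proof. intros H E. replace g with f; auto. apply functional_extensionality; auto. Qed.

Lemma I_add f g : I f -> I g -> I (fun l => f l + g l).
Proof. destruct HI as [_ [H _]]; auto. Qed.

Lemma I_mul f g : I f -> I (fun l => g l * f l).
Proof. destruct HI as [_ [_ H]]; auto. Qed.

Lemma I_opp f : I f -> I (fun l => - f l).
Proof. intros H. apply (I_ext _ _ (I_mul f (fun _ => -1) H)); intros; ring. Qed.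

Lemma I_zero : I (fun _ => 0).
Proof. destruct HI; auto. Qed.

Lemma Jeq f g : I (fun l => f l - g l) -> J I f = J I g.
Proof.
intros H. apply functional_extensionality; intros h. unfold J.
apply propositional_extensionality; split; intros H1.
- apply (I_ext _ _ (I_add _ _ H1 (I_opp _ H))); intros; ring.
- apply (I_ext _ _ (I_add _ _ H1 H)); intros; ring.
Qed.

Lemma Jinv f g : J I f = J I g -> I (fun l => f l - g l).
Proof.
intros E. change (J I f g). rewrite E. unfold J.
apply (I_ext _ _ I_zero); intros; ring.
Qed.

Lemma qmulJ f g : qmul I (J I f) (J I g) = J I (fun l => f l * g l).
Proof.
apply functional_extensionality; intros h. unfold qmul.
apply propositional_extensionality; split.
- intros [f' [g' [Ef [Eg Hh]]]]. apply Jinv in Ef. apply Jinv in Eg. unfold J.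
  pose proof (I_mul _ f Eg) as A. pose proof (I_mul _ g' Ef) as B.
  apply (I_ext _ _ (I_add _ _ (I_add _ _ A B) (I_opp _ Hh))); intros; ring.
- intros H. exists f, g. split; [reflexivity|split; [reflexivity|]].
  apply (I_ext _ _ (I_opp _ H)); intros; ring.
Qed.

Lemma qaddJ f g : qadd I (J I f) (J I g) = J I (fun l => f l + g l).
Proof.
apply functional_extensionality; intros h. unfold qadd.
apply propositional_extensionality; split.
- intros [f' [g' [Ef [Eg Hh]]]]. apply Jinv in Ef. apply Jinv in Eg. unfold J.
  apply (I_ext _ _ (I_add _ _ (I_add _ _ Ef Eg) (I_opp _ Hh))); intros; ring.
- intros H. exists f, g. split; [reflexivity|split; [reflexivity|]].
  apply (I_ext _ _ (I_opp _ H)); intros; ring.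
Qed.
End Id.
End RealPart.
Require Import Defs.
From mathcomp Require Import all_boot all_order all_algebra.
From Stdlib Require Import Reals.

Theorem mainTheorem16 (I : FF -> Prop) :
  fine_ideal I ->
  (forall phi, I0LambdaQ phi -> I phi) ->
  let alpha := numerosity I natpos in
  numerosity I posrat = qmul I alpha alpha /\
  numerosity I allrat =
    qadd I (qmul I (qconst I 2%R) (qmul I alpha alpha)) (qconst I 1%R) /\
  NAP_P I natpos =
    qdiv I alpha (qadd I (qmul I (qconst I 2%R) (qmul I alpha alpha)) (qconst I 1%R)).
Proof.
intros HF H0 alpha. destruct HF as [[Hid _] _].
unfold alpha, numerosity, qconst.
rewrite !(RealPart.qmulJ I Hid) (RealPart.qaddJ I Hid).
assert (E2 : J I (fun l => INR (card_in allrat l)) =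
  J I (fun l => (2 * (INR (card_in natpos l) * INR (card_in natpos l)) + 1)%R)).
{ apply (RealPart.Jeq I Hid). apply H0. intros l Hl.
  destruct (RatPart.counts l Hl) as [n [a [b c]]].
  rewrite a c S_INR.
  replace (INR (n*n).*2) with (INR (n*n) + INR (n*n))%R.
  2:{ rewrite <- addnn. symmetry. apply plus_INR. }
  replace (INR (n*n)) with (INR n * INR n)%R by (symmetry; apply mult_INR).
  ring. }
split; [|split].
- apply (RealPart.Jeq I Hid). apply H0. intros l Hl.
  destruct (RatPart.counts l Hl) as [n [a [b c]]].
  rewrite a b. replace (INR (n*n)) with (INR n * INR n)%R by (symmetry; apply mult_INR).
  ring.
- exact E2.
- unfold NAP_P, numerosity. rewrite E2. reflexivity.
Qed.
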